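(* Let $(B,\alpha_B)$ and $(H,\alpha_H)$ be Hom-coalgebras whose structure maps are morphisms in $\overline{\mathcal H}^{i,j}(Vec_\Bbbk)$ (in particular $\alpha_B,\alpha_H$ bijective), and let $\varphi:B\otimes H\to H\otimes B$, $\varphi(b\otimes h)=\sum h^\varphi\otimes b^\varphi$, be linear with $\varphi\circ(\alpha_B\otimes\alpha_H)=(\alpha_H\otimes\alpha_B)\circ\varphi$. For $n\in\mathbb Z$ define $\ddot\varphi(n)_X:(X\otimes B)\otimes H\to(X\otimes H)\otimes B$, $(x\otimes b)\otimes h\mapsto\sum(x\otimes\alpha_H(h)^\varphi)\otimes\alpha_B^n\big((\alpha_B^{-n-1}(b))^\varphi\big)$ (where $\varphi$ is applied to $\alpha_B^{-n-1}(b)\otimes\alpha_H(h)$). Then $\ddot\varphi(n):\ddot H\ddot B\to\ddot B\ddot H$ is a comonad distributive law if and only if for all $b\in B$, $h\in H$: (M1) $((\varphi\otimes\mathrm{id}_B)\circ(\mathrm{id}_B\otimes\varphi))(\Delta_B(b)\otimes\alpha_H(h))=(\alpha_H\otimes\Delta_B)(\varphi(b\otimes h))$; (M2) $((\mathrm{id}_H\otimes\varphi)\circ(\varphi\otimes\mathrm{id}_H))(\alpha_B(b)\otimes\Delta_H(h))=(\Delta_H\otimes\alpha_B)(\varphi(b\otimes h))$; (M3) $(\varepsilon_H\otimes\mathrm{id}_B)(\varphi(b\otimes h))=\varepsilon_H(h)b$; (M4) $(\mathrm{id}_H\otimes\varepsilon_B)(\varphi(b\otimes h))=\varepsilon_B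(b)h$.
   Context: $\Bbbk$ is a field of characteristic $0$; all vector spaces finite-dimensional; $i,j$ fixed integers. $\overline{\mathcal H}^{i,j}(Vec_\Bbbk)$: objects $(X,\alpha_X)$ with $\alpha_X$ a linear automorphism; morphisms linear maps commuting with the $\alpha$'s; tensor $(X\otimes Y,\alpha_X\otimes\alpha_Y)$, unit $(\Bbbk,\mathrm{id})$; $a_{X,Y,Z}((x\otimes y)\otimes z)=\alpha_X^{i+1}(x)\otimes(y\otimes\alpha_Z^{-j-1}(z))$, $l_X(\lambda\otimes x)=\lambda\alpha_X^{j+1}(x)$, $r_X(x\otimes\lambda)=\lambda\alpha_X^{i+1}(x)$. Hom-coalgebra $(C,\alpha,\Delta,\varepsilon)$: $\varepsilon\alpha=\varepsilon$, $\alpha(c_1)\otimes\Delta(c_2)=\Delta(c_1)\otimes\alpha(c_2)$, $\varepsilon(c_1)c_2=c_1\varepsilon(c_2)=\alpha(c)$. For a Hom-coalgebra $C$, $\ddot C=-\otimes C$ is the comonad on $\overline{\mathcal H}^{i,j}(Vec_\Bbbk)$ with comultiplication $x\otimes c\mapsto(\alpha_X(x)\otimes c_1)\otimes\alpha_C^{-1}(c_2)$ and counit $x\otimes c\mapsto\varepsilon_C(c)\alpha_X^{-1}(x)$. A comonad distributive law between comonads $(F,\Delta,\varepsilon)$ and $(G,\delta,\epsilon)$ is a natural $\psi:FG\to GF$ with $G\psi\circ\psi G\circ F\delta=\delta F\circ\psi$, $\psi F\circ F\psi\circ\Delta G=G\Delta\circ\psi$, $G\varepsilon\circ\psi=\varepsilon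 G$, $\epsilon F\circ\psi=F\epsilon$. *)

(* Defs.v *)
(* Finite-dimensional k-vector spaces are modelled by their
   coordinate spaces 'rV[K]_n (every f.d. space is isomorphic to one); linear
   maps X -> Y are matrices acting on row vectors on the right (f x = x *m F,
   so g \o f is F *m G).  The tensor product of spaces/maps is the Kronecker
   product  A *t B  of mathcomp real_closed/mxtens.v, with row-major index
   (i,j) |-> i * n + j, so that the canonical linear identification
   (X (x) Y) (x) Z = X (x) (Y (x) Z) is exactly castmx by mulnA, and
   X (x) k = X, k (x) X = X are castmx by muln1 / mul1n. *)
From HB Require Import structures.
From mathcomp Require Import all_boot all_order all_algebra.
From mathcomp.real_closed Require Export mxtens.
Set Implicit Arguments. Unset Strict Implicit. Unset Printing Implicit Defensive.
Import Order.TTheory GRing.Theory Num.Theory.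
Local Open Scope ring_scope.

Section HomDefs.
Variable K : fieldType.

Definition mxpowz (n : nat) (A : 'M[K]_n) (z : int) : 'M[K]_n :=
  match z with
  | Posz k => iter k (mulmx A) 1%:M
  | Negz k => iter k.+1 (mulmx (invmx A)) 1%:M   (* Negz k = -(k+1) *)
  end.

(* (C, aC, D, E) is a Hom-coalgebra whose structure maps are morphisms of
   Hbar^{i,j}(Vec_k):  aC bijective, D \o aC = (aC (x) aC) \o D,
   eps \o aC = eps, alpha(c1) (x) D(c2) = D(c1) (x) alpha(c2) (under the
   canonical identification C(x)(C(x)C) = (C(x)C)(x)C),
   eps(c1) c2 = c1 eps(c2) = alpha(c). *)
Definition hom_coalgebra (c : nat) (aC : 'M[K]_c) (D : 'M[K]_(c, c * c))
    (E : 'M[K]_(c, 1)) : Prop :=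
  [/\ aC \in unitmx,
      aC *m D = D *m (aC *t aC) /\ aC *m E = E,
      castmx (erefl _, mulnA c c c) (D *m (aC *t D)) = D *m (D *t aC),
      castmx (erefl _, mul1n c) (D *m (E *t 1%:M)) = aC &
      castmx (erefl _, muln1 c) (D *m (1%:M *t E)) = aC].

(* The comonad  C.. = - (x) C  on Hbar^{i,j}(Vec_k).  An object is (m, aX)
   with aX : 'M_m invertible; C..(m, aX) = (m * c, aX *t aC); on morphisms
   f |-> f *t 1. *)
(* comultiplication at X : x (x) c |-> (aX x (x) c1) (x) aC^{-1}(c2) *)
Definition comon_delta (c : nat) (aC : 'M[K]_c) (D : 'M[K]_(c, c * c))
    (m : nat) (aX : 'M[K]_m) : 'M[K]_(m * c, m * c * c) :=
  castmx (erefl _, mulnA m c c) (aX *t (D *m (1%:M *t invmx aC))).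

Definition comon_eps (c : nat) (E : 'M[K]_(c, 1))
    (m : nat) (aX : 'M[K]_m) : 'M[K]_(m * c, m) :=
  castmx (erefl _, muln1 m) (invmx aX *t E).

(* psi : F G -> G F  is a comonad distributive law between the comonads
   F = f.. (for the Hom-coalgebra (f, aF, DF, EF)) and G = g.. (for
   (g, aG, DG, EG)).  psi m aX is the component at the object X = (m, aX),
   a linear map (X (x) g) (x) f -> (X (x) f) (x) g. *)
Definition comonad_distr_law
    (f : nat) (aF : 'M[K]_f) (DF : 'M[K]_(f, f * f)) (EF : 'M[K]_(f, 1))
    (g : nat) (aG : 'M[K]_g) (DG : 'M[K]_(g, g * g)) (EG : 'M[K]_(g, 1))
    (psi : forall m : nat, 'M[K]_m -> 'M[K]_(m * g * f, m * f * g)) : Prop :=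
  forall (m : nat) (aX : 'M[K]_m), aX \in unitmx ->
  [/\ (* the component is a morphism of Hbar^{i,j}(Vec_k), and naturality *)
      ((aX *t aG) *t aF) *m psi m aX = psi m aX *m ((aX *t aF) *t aG) /\
      (forall (m' : nat) (aY : 'M[K]_m') (u : 'M[K]_(m, m')),
         aY \in unitmx -> aX *m u = u *m aY ->
         ((u *t (1%:M : 'M[K]_g)) *t (1%:M : 'M[K]_f)) *m psi m' aY
         = psi m aX *m ((u *t (1%:M : 'M[K]_f)) *t (1%:M : 'M[K]_g))),
      (* G psi . psi G . F delta = delta F . psi *)
      (comon_delta aG DG aX *t (1%:M : 'M[K]_f)) *m psi (m * g) (aX *t aG)
         *m (psi m aX *t (1%:M : 'M[K]_g))
      = psi m aX *m comon_delta aG DG (aX *t aF),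
      (* psi F . F psi . Delta G = G Delta . psi *)
      comon_delta aF DF (aX *t aG) *m (psi m aX *t (1%:M : 'M[K]_f))
         *m psi (m * f) (aX *t aF)
      = psi m aX *m (comon_delta aF DF aX *t (1%:M : 'M[K]_g)),
      (* G eps . psi = eps G *)
      psi m aX *m (comon_eps EF aX *t (1%:M : 'M[K]_g))
      = comon_eps EF (aX *t aG) &
      (* epsilon F . psi = F epsilon *)
      psi m aX *m comon_eps EG (aX *t aF)
      = comon_eps EG aX *t (1%:M : 'M[K]_f)].

(* The local part of phi..(n)_X :
   b (x) h |-> sum alpha_H(h)^phi (x) alpha_B^n((alpha_B^{-n-1}(b))^phi),
   i.e. (id_H (x) aB^n) . phi . (aB^{-n-1} (x) aH). *)
Definition phi_twist (b h : nat) (aB : 'M[K]_b) (aH : 'M[K]_h)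
    (Phi : 'M[K]_(b * h, h * b)) (n : int) : 'M[K]_(b * h, h * b) :=
  (mxpowz aB (- n - 1) *t aH) *m Phi *m ((1%:M : 'M[K]_h) *t mxpowz aB n).

Definition ddot_phi (b h : nat) (aB : 'M[K]_b) (aH : 'M[K]_h)
    (Phi : 'M[K]_(b * h, h * b)) (n : int)
    (m : nat) (aX : 'M[K]_m) : 'M[K]_(m * b * h, m * h * b) :=
  castmx (mulnA m b h, mulnA m h b)
    ((1%:M : 'M[K]_m) *t phi_twist aB aH Phi n).

End HomDefs.

(* Main.v *)
Require Import Defs.
From HB Require Import structures.
From mathcomp Require Import all_boot all_order all_algebra.
From mathcomp.real_closed Require Import mxtens.
Set Implicit Arguments. Unset Strict Implicit. Unset Printing Implicit Defensive.
Import Order.TTheory GRing.Theory Num.Theory.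
Local Open Scope ring_scope.

Section Infra.
Variable K : fieldType.

Definition cI (p q : nat) : 'M[K]_(p, q) := \matrix_(i, j) ((i : nat) == j)%:R.

Lemma cI_id p : cI p p = 1%:M.
Proof. by apply/matrixP=> i j; rewrite !mxE. Qed.

Lemma cI_mul p q r : p = q -> cI p q *m cI q r = cI p r.
Proof. by move=> e; subst; rewrite cI_id mul1mx. Qed.

Lemma cI_mul' p q r : q = r -> cI p q *m cI q r = cI p r.
Proof. by move=> e; subst; rewrite cI_id mulmx1. Qed.

Lemma tens11 p q : (1%:M : 'M[K]_p) *t (1%:M : 'M[K]_q) = 1%:M.
Proof.
apply/matrixP=> i j.
case: (mxtens_indexP i)=> i1 i2; case: (mxtens_indexP j)=> j1 j2.
rewrite tensmxE !mxE -natrM -!val_eqE /= eq_addl_mul ?ltn_ord //.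
by rewrite xpair_eqE mulnb.
Qed.

Lemma cI_tens p q p' q' : p = q -> p' = q' ->
  cI p q *t cI p' q' = cI (p * p') (q * q').
Proof. by move=> e e'; subst; rewrite !cI_id tens11. Qed.

Lemma castmx_cI m m' n n' (e1 : m = m') (e2 : n = n') (M : 'M[K]_(m, n)) :
  castmx (e1, e2) M = cI m' m *m M *m cI n n'.
Proof. by case: m' / e1; case: n' / e2; rewrite castmx_id !cI_id mul1mx mulmx1. Qed.

Lemma tensmxA m n p q r s (A : 'M[K]_(m, n)) (B : 'M[K]_(p, q)) (C : 'M[K]_(r, s)) :
  castmx (mulnA m p r, mulnA n q s) (A *t (B *t C)) = A *t B *t C.
Proof.
apply/matrixP=> i j; rewrite castmxE.
case: (mxtens_indexP i)=> i12 i3; case: (mxtens_indexP i12)=> i1 i2.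
case: (mxtens_indexP j)=> j12 j3; case: (mxtens_indexP j12)=> j1 j2.
rewrite !tensmxE.
have -> : cast_ord (esym (mulnA m p r)) (mxtens_index (mxtens_index (i1, i2), i3))
   = mxtens_index (i1, mxtens_index (i2, i3)).
  by apply: val_inj => /=; rewrite mulnDl -mulnA addnA.
have -> : cast_ord (esym (mulnA n q s)) (mxtens_index (mxtens_index (j1, j2), j3))
   = mxtens_index (j1, mxtens_index (j2, j3)).
  by apply: val_inj => /=; rewrite mulnDl -mulnA addnA.
by rewrite !tensmxE mulrA.
Qed.

Lemma natA m n p q r s (A : 'M[K]_(m, n)) (B : 'M[K]_(p, q)) (C : 'M[K]_(r, s)) :
  A *t B *t C *m cI (n * q * s) (n * (q * s)) = cI (m * p * r) (m * (p * r)) *m (A *t (B *t C)).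
Proof.
rewrite -tensmxA castmx_cI -[LHS]mulmxA cI_mul ?mulnA //.
by rewrite cI_id mulmx1.
Qed.

Lemma natA' m n p q r s (A : 'M[K]_(m, n)) (B : 'M[K]_(p, q)) (C : 'M[K]_(r, s)) :
  A *t (B *t C) *m cI (n * (q * s)) (n * q * s) = cI (m * (p * r)) (m * p * r) *m (A *t B *t C).
Proof.
rewrite -tensmxA castmx_cI !mulmxA cI_mul ?mulnA // cI_id mul1mx.
done.
Qed.

Lemma lunit m n (A : 'M[K]_(m, n)) :
  (1%:M : 'M[K]_1) *t A = cI (1 * m) m *m A *m cI n (1 * n).
Proof. by rewrite tens_scalar_mx scale1r castmx_cI. Qed.

Lemma runit m n (A : 'M[K]_(m, n)) :
  A *t (1%:M : 'M[K]_1) = cI (m * 1) m *m A *m cI n (n * 1).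
Proof. by rewrite tens_mx_scalar scale1r castmx_cI. Qed.

Lemma tens_rowP p q r (A B : 'M[K]_(p * q, r)) :
  (forall (x : 'rV[K]_p) (y : 'rV[K]_q), (x *t y) *m A = (x *t y) *m B) -> A = B.
Proof.
move=> H; apply/row_matrixP=> k; rewrite !rowE.
case: (mxtens_indexP k)=> i j.
have <- : (delta_mx 0 i *t delta_mx 0 j : 'M[K]_(1 * 1, p * q)) = delta_mx 0 (mxtens_index (i, j)).
  apply/matrixP=> r0 c; case: (mxtens_indexP c)=> c1 c2.
  case: (mxtens_indexP r0)=> r1 r2.
  rewrite tensmxE !mxE [r1]ord1 [r2]ord1 -!val_eqE /=.
  rewrite (eq_addl_mul _ _ (ltn_ord c2) (ltn_ord j)) -natrM.
  by rewrite xpair_eqE mulnb.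
exact: H.
Qed.

Lemma invmx_tens m p (A : 'M[K]_m) (B : 'M[K]_p) : A \in unitmx -> B \in unitmx ->
  invmx (A *t B) = invmx A *t invmx B.
Proof.
move=> uA uB.
have h1 : (invmx A *t invmx B) *m (A *t B) = 1%:M by rewrite tensmx_mul !mulVmx // tens11.
have [u1 u2] := mulmx1_unit h1.
by rewrite -[LHS]mul1mx -h1 -mulmxA mulmxV // mulmx1.
Qed.

Lemma unitmx_tens m p (A : 'M[K]_m) (B : 'M[K]_p) : A \in unitmx -> B \in unitmx ->
  A *t B \in unitmx.
Proof.
move=> uA uB.
have h1 : (invmx A *t invmx B) *m (A *t B) = 1%:M by rewrite tensmx_mul !mulVmx // tens11.
by have [] := mulmx1_unit h1.
Qed.


Definition pw m (Y : 'M[K]_m) k := iter k (mulmx Y) 1%:M.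

Lemma pwSr m (Y : 'M[K]_m) k : pw Y k.+1 = pw Y k *m Y.
Proof.
elim: k => [|k IH]; first by rewrite /pw iterS mulmx1 mul1mx.
rewrite [pw Y k.+2]/pw iterS -/(pw Y k.+1) IH mulmxA -IH.
done.
Qed.

Section Good.
Variables (b : nat) (B : 'M[K]_b) (DB : 'M[K]_(b, b * b)) (EB : 'M[K]_(b, 1)).
Hypotheses (uB : B \in unitmx) (hD : B *m DB = DB *m (B *t B)) (hE : B *m EB = EB).

Definition good X := [/\ X \in unitmx, X *m B = B *m X, X *m invmx B = invmx B *m X,
  X *m DB = DB *m (X *t X) & X *m EB = EB].

Lemma good1 : good 1%:M.
Proof. by rewrite /good; split; rewrite ?unitmx1 ?mul1mx ?mulmx1 ?tens11 ?mulmx1. Qed.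

Lemma goodB : good B.
Proof.
rewrite /good; split=> //; first by rewrite mulmxV // mulVmx.
Qed.

Lemma goodiB : good (invmx B).
Proof.
rewrite /good; split; rewrite ?unitmx_inv //; first by rewrite mulVmx // mulmxV.
- rewrite -[DB in RHS](mulKmx uB) hD -!mulmxA tensmx_mul !mulmxV //.
  by rewrite tens11 mulmx1.
- by rewrite -{1}hE mulKmx.
Qed.

Lemma goodM X Y : good X -> good Y -> good (X *m Y).
Proof.
case=> uX bX iX dX eX [uY bY iY dY eY]; rewrite /good; split.
- by rewrite unitmx_mul uX uY.
- by rewrite -mulmxA bY !mulmxA bX.
- by rewrite -mulmxA iY !mulmxA iX.
- by rewrite -mulmxA dY mulmxA dX -mulmxA tensmx_mul.
- by rewrite -mulmxA eY eX.
Qed.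

Lemma good_pw X k : good X -> good (pw X k).
Proof.
move=> gX; elim: k => [|k IH]; first exact: good1.
exact: goodM.
Qed.

Lemma pw_inv k : pw (invmx B) k *m pw B k = 1%:M.
Proof.
elim: k => [|k IH]; first by rewrite /pw /= mulmx1.
rewrite [pw (invmx B) k.+1]/pw iterS -/(pw (invmx B) k) pwSr.
by rewrite -!mulmxA [pw _ k *m (_ *m _)]mulmxA IH mul1mx mulVmx.
Qed.

Lemma pw_inv' k : pw B k *m pw (invmx B) k = 1%:M.
Proof.
elim: k => [|k IH]; first by rewrite /pw /= mulmx1.
rewrite [pw B k.+1]/pw iterS -/(pw B k) pwSr.
by rewrite -!mulmxA [pw _ k *m (_ *m _)]mulmxA IH mul1mx mulmxV.
Qed.

Lemma powPQ (n : int) :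
  [/\ good (mxpowz B (- n - 1)), good (mxpowz B n),
      mxpowz B (- n - 1) *m mxpowz B n = invmx B &
      mxpowz B n *m mxpowz B (- n - 1) = invmx B].
Proof.
case: n => k.
- have -> : - Posz k - 1 = Negz k by rewrite NegzE -addn1 PoszD opprD.
  rewrite /mxpowz -/(pw B k) -/(pw (invmx B) k.+1).
  split; [exact/good_pw/goodiB | exact/good_pw/goodB | |].
  + by rewrite [pw _ k.+1]/pw iterS -/(pw (invmx B) k) -mulmxA pw_inv mulmx1.
  + by rewrite pwSr mulmxA pw_inv' mul1mx.
- have -> : - Negz k - 1 = Posz k by rewrite NegzE opprK -addn1 PoszD addrK.
  rewrite /mxpowz -/(pw B k) -/(pw (invmx B) k.+1).
  split; [exact/good_pw/goodB | exact/good_pw/goodiB | |].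
  + by rewrite pwSr mulmxA pw_inv' mul1mx.
  + by rewrite [pw _ k.+1]/pw iterS -/(pw (invmx B) k) -mulmxA pw_inv mulmx1.
Qed.

End Good.

Lemma sand p q (U : 'M[K]_p) (V : 'M[K]_q) (X Y : 'M[K]_(p, q)) :
  U \in unitmx -> V \in unitmx -> (U *m X *m V = U *m Y *m V <-> X = Y).
Proof.
move=> uU uV; split=> [e|-> //].
have := congr1 (fun Z => invmx U *m Z *m invmx V) e => /=.
by rewrite !mulmxA !mulmxK // !mulVmx // !mul1mx.
Qed.

Lemma mulmx_r p q r (A : 'M[K]_(p, q)) (X Y : 'M[K]_(q, r)) : X = Y -> A *m X = A *m Y.
Proof. by move->. Qed.

Lemma lassoc p q r s t (X : 'M[K]_(q, r)) (Y : 'M[K]_(r, s)) (X' : 'M[K]_(q, t)) (Y' : 'M[K]_(t, s)) :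
  X *m Y = X' *m Y' -> forall (Z : 'M[K]_(p, q)), Z *m X *m Y = Z *m X' *m Y'.
Proof. by move=> e Z; rewrite -!mulmxA e. Qed.

Lemma ctx2 p q r s (X : 'M[K]_(p, q)) (Y : 'M[K]_(q, r)) (W : 'M[K]_(p, r)) :
  X *m Y = W -> forall (M : 'M[K]_(r, s)), X *m (Y *m M) = W *m M.
Proof. by move=> e M; rewrite mulmxA e. Qed.

Lemma ctx3 p q r r' s (X : 'M[K]_(p, q)) (Y : 'M[K]_(q, r)) (Z : 'M[K]_(r, r')) (W : 'M[K]_(p, r')) :
  X *m Y *m Z = W -> forall (M : 'M[K]_(r', s)), X *m (Y *m (Z *m M)) = W *m M.
Proof. by move=> e M; rewrite !mulmxA e. Qed.

Lemma ctx4 p q r r' r'' s (X : 'M[K]_(p, q)) (Y : 'M[K]_(q, r)) (Z : 'M[K]_(r, r')) (Z' : 'M[K]_(r', r''))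
  (W : 'M[K]_(p, r'')) :
  X *m Y *m Z *m Z' = W -> forall (M : 'M[K]_(r'', s)), X *m (Y *m (Z *m (Z' *m M))) = W *m M.
Proof. by move=> e M; rewrite !mulmxA e. Qed.

Lemma lunitR p q (A : 'M[K]_(p, q)) :
  (1%:M : 'M[K]_1) *t A *m cI (1 * q) q = cI (1 * p) p *m A.
Proof. by rewrite lunit -(mulmxA _ (cI q (1 * q))) (cI_mul _ (esym (mul1n q))) cI_id mulmx1. Qed.

Lemma runitR p q (A : 'M[K]_(p, q)) :
  A *t (1%:M : 'M[K]_1) *m cI (q * 1) q = cI (p * 1) p *m A.
Proof. by rewrite runit -(mulmxA _ (cI q (q * 1))) (cI_mul _ (esym (muln1 q))) cI_id mulmx1. Qed.


Section Local.
Variables (b h : nat) (B P Q : 'M[K]_b) (H : 'M[K]_h).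
Variables (DB : 'M[K]_(b, b * b)) (EB : 'M[K]_(b, 1)).
Variables (DH : 'M[K]_(h, h * h)) (EH : 'M[K]_(h, 1)) (Phi : 'M[K]_(b * h, h * b)).
Hypotheses (uB : B \in unitmx) (uH : H \in unitmx)
  (hDB : B *m DB = DB *m (B *t B)) (hEB : B *m EB = EB)
  (hDH : H *m DH = DH *m (H *t H)) (hEH : H *m EH = EH)
  (hPhi : (B *t H) *m Phi = Phi *m (H *t B))
  (gP : good B DB EB P) (gQ : good B DB EB Q)
  (PQ : P *m Q = invmx B) (QP : Q *m P = invmx B).

Local Notation T := ((P *t H) *m Phi *m (1%:M *t Q)).

Lemma L3_iff :
  T *m (EH *t (1%:M : 'M_b)) *m cI (1 * b) b = (invmx B *t EH) *m cI (b * 1) b <->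
  Phi *m (EH *t (1%:M : 'M_b)) *m cI (1 * b) b = ((1%:M : 'M_b) *t EH) *m cI (b * 1) b.
Proof.
have [uP _ _ _ _] := gP; have [uQ _ _ _ _] := gQ.
have e1 : T *m (EH *t (1%:M : 'M_b)) *m cI (1 * b) b
   = (P *t H) *m (Phi *m (EH *t (1%:M : 'M_b)) *m cI (1 * b) b) *m Q.
  rewrite -!mulmxA. do 2 apply: mulmx_r.
  rewrite !mulmxA tensmx_mul mul1mx mulmx1.
  rewrite -[EH in LHS]mulmx1 -[Q in LHS]mul1mx -tensmx_mul.
  by rewrite -!mulmxA lunitR.
have e2 : (invmx B *t EH) *m cI (b * 1) b
   = (P *t H) *m (((1%:M : 'M_b) *t EH) *m cI (b * 1) b) *m Q.
  by rewrite -!mulmxA -runitR !mulmxA !tensmx_mul !mulmx1 PQ hEH.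
rewrite e1 e2; apply: sand => //; exact: unitmx_tens.
Qed.


Let uP : P \in unitmx. Proof. by case: gP. Qed.
Let uQ : Q \in unitmx. Proof. by case: gQ. Qed.
Let gR : good B DB EB (P *m invmx B). Proof. exact: goodM gP (goodiB uB hDB hEB). Qed.
Let gS : good B DB EB (B *m Q). Proof. exact: goodM (goodB uB hDB hEB) gQ. Qed.
Let uR : P *m invmx B \in unitmx. Proof. by case: gR. Qed.
Let uS : B *m Q \in unitmx. Proof. by case: gS. Qed.

Local Notation R := (P *m invmx B).
Local Notation S := (B *m Q).

Lemma Talt : T = (R *t (1%:M : 'M_h)) *m Phi *m (H *t S).
Proof.
have eHS : H *t S = (H *t B) *m ((1%:M : 'M_h) *t Q) by rewrite tensmx_mul mulmx1.
have rb : R *m B = P by rewrite -mulmxA mulVmx // mulmx1.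
symmetry; rewrite eHS mulmxA -(mulmxA _ Phi) -hPhi mulmxA tensmx_mul.
by rewrite rb mul1mx.
Qed.

Lemma L0_holds : (B *t H) *m T = T *m (H *t B).
Proof.
have [_ bP _ _ _] := gP; have [_ bQ _ _ _] := gQ.
rewrite !mulmxA tensmx_mul -bP -tensmx_mul.
rewrite -(mulmxA _ (B *t H)) hPhi -!mulmxA tensmx_mul tensmx_mul.
by rewrite mul1mx mulmx1 bQ.
Qed.

Lemma L4_iff :
  T *m (invmx H *t EB) *m cI (h * 1) h = (EB *t (1%:M : 'M_h)) *m cI (1 * h) h <->
  Phi *m ((1%:M : 'M_h) *t EB) *m cI (h * 1) h = (EB *t (1%:M : 'M_h)) *m cI (1 * h) h.
Proof.
have [_ _ _ _ eP] := gP; have [_ _ _ _ eQ] := gQ.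
have e1 : T *m (invmx H *t EB) *m cI (h * 1) h
   = (P *t H) *m (Phi *m ((1%:M : 'M_h) *t EB) *m cI (h * 1) h) *m invmx H.
  by rewrite -!mulmxA -runitR !(ctx2 (tensmx_mul _ _ _ _)) mul1mx mulmx1 eQ.
have e2 : (EB *t (1%:M : 'M_h)) *m cI (1 * h) h
   = (P *t H) *m ((EB *t (1%:M : 'M_h)) *m cI (1 * h) h) *m invmx H.
  by rewrite -!mulmxA -lunitR !(ctx2 (tensmx_mul _ _ _ _)) !mulmx1 ?mul1mx eP ?mulmxV.
rewrite e1 {1}e2; apply: sand => //; [exact: unitmx_tens | by rewrite unitmx_inv].
Qed.


Local Notation D' := (DB *m ((1%:M : 'M_b) *t invmx B)).
Local Notation c1 := (cI (b * b * h) (b * (b * h))).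
Local Notation c2 := (cI (b * (h * b)) (b * h * b)).
Local Notation c3 := (cI (h * (b * b)) (h * b * b)).

Lemma L1_iff :
  (D' *t (1%:M : 'M_h)) *m c1 *m ((1%:M : 'M_b) *t T) *m c2 *m (T *t (1%:M : 'M_b))
    = T *m (H *t D') *m c3 <->
  (DB *t H) *m c1 *m ((1%:M : 'M_b) *t Phi) *m c2 *m (Phi *t (1%:M : 'M_b))
    = Phi *m (H *t DB) *m c3.
Proof.
have [_ bP iP dP eP] := gP; have [_ bQ iQ dQ eQ] := gQ.
have [_ bR iR dR eR] := gR; have [_ bS iS dS eS] := gS.
have ea : (1%:M : 'M_b) *t T = ((1%:M : 'M_b) *t (P *t H)) *m ((1%:M : 'M_b) *t Phi)
          *m ((1%:M : 'M_b) *t ((1%:M : 'M_h) *t Q)).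
  by rewrite !tensmx_mul !mul1mx.
have eb : T *t (1%:M : 'M_b) = ((R *t (1%:M : 'M_h)) *t (1%:M : 'M_b)) *m (Phi *t (1%:M : 'M_b))
          *m ((H *t S) *t (1%:M : 'M_b)).
  by rewrite !tensmx_mul !mul1mx Talt.
have s1 : ((1%:M : 'M_b) *t ((1%:M : 'M_h) *t Q)) *m c2 *m ((R *t (1%:M : 'M_h)) *t (1%:M : 'M_b))
        = (R *t ((1%:M : 'M_h) *t Q)) *m c2.
  by rewrite !natA' -mulmxA !tensmx_mul !mul1mx !mulmx1.
have s2 : ((1%:M : 'M_b) *t Phi) *m (R *t ((1%:M : 'M_h) *t Q))
        = (R *t (1%:M : 'M_(b * h))) *m ((1%:M : 'M_b) *t (Phi *m ((1%:M : 'M_h) *t Q))).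
  by rewrite !tensmx_mul !mul1mx mulmx1.
have s3 : c1 *m ((1%:M : 'M_b) *t (P *t H)) *m (R *t (1%:M : 'M_(b * h)))
        = ((R *t P) *t H) *m c1.
  by rewrite natA -mulmxA tensmx_mul mul1mx mulmx1.
have s4 : (D' *t (1%:M : 'M_h)) *m ((R *t P) *t H) = (R *t (1%:M : 'M_h)) *m (DB *t H).
  rewrite !tensmx_mul !mul1mx -mulmxA tensmx_mul mul1mx -iP dR.
  done.
have s5 : ((1%:M : 'M_b) *t (Phi *m ((1%:M : 'M_h) *t Q))) *m (c2 *m ((Phi *t (1%:M : 'M_b))
           *m ((H *t S) *t (1%:M : 'M_b))))
        = ((1%:M : 'M_b) *t Phi) *m (c2 *m ((Phi *t (1%:M : 'M_b)) *m ((H *t S) *t Q))).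
  have f : (1%:M : 'M_b) *t (Phi *m ((1%:M : 'M_h) *t Q))
         = ((1%:M : 'M_b) *t Phi) *m ((1%:M : 'M_b) *t ((1%:M : 'M_h) *t Q)).
    by rewrite tensmx_mul mul1mx.
  rewrite f -!mulmxA (ctx2 (natA' _ _ _)) -!mulmxA !tensmx_mul.
  by rewrite tens11 !mul1mx !mulmx1.
have sD : S *m D' = DB *m (S *t Q).
  by rewrite mulmxA dS -mulmxA tensmx_mul mulmx1 -(mulmxA B) iQ (mulmxA B) mulmxV // mul1mx.
have e1 : (D' *t (1%:M : 'M_h)) *m c1 *m ((1%:M : 'M_b) *t T) *m c2 *m (T *t (1%:M : 'M_b))
   = (R *t (1%:M : 'M_h)) *m ((DB *t H) *m c1 *m ((1%:M : 'M_b) *t Phi) *m c2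
       *m (Phi *t (1%:M : 'M_b))) *m ((H *t S) *t Q).
  rewrite ea eb -!mulmxA (ctx3 s1) -!mulmxA (ctx2 s2) -!mulmxA (ctx3 s3) -!mulmxA.
  by rewrite (ctx2 s4) -!mulmxA s5.
have e2 : T *m (H *t D') *m c3
   = (R *t (1%:M : 'M_h)) *m (Phi *m (H *t DB) *m c3) *m ((H *t S) *t Q).
  rewrite Talt -!mulmxA -natA' !(ctx2 (tensmx_mul _ _ _ _)) sD.
  done.
rewrite e1 {1}e2; apply: sand => //; apply: unitmx_tens; rewrite ?unitmx1 //.
by apply: unitmx_tens.
Qed.


Local Notation E' := (DH *m ((1%:M : 'M_h) *t invmx H)).
Local Notation c4 := (cI (b * (h * h)) (b * h * h)).
Local Notation c5 := (cI (h * b * h) (h * (b * h))).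
Local Notation c6 := (cI (h * (h * b)) (h * h * b)).
Local Notation c6i := (cI (h * h * b) (h * (h * b))).

Lemma L2_iff :
  (B *t E') *m c4 *m (T *t (1%:M : 'M_h)) *m c5 *m ((1%:M : 'M_h) *t T)
    = T *m (E' *t (1%:M : 'M_b)) *m c6i <->
  (B *t DH) *m c4 *m (Phi *t (1%:M : 'M_h)) *m c5 *m ((1%:M : 'M_h) *t Phi) *m c6
    = Phi *m (DH *t B).
Proof.
have [_ bP iP dP eP] := gP; have [_ bQ iQ dQ eQ] := gQ.
have [_ bR iR dR eR] := gR; have [_ bS iS dS eS] := gS.
have ea : (1%:M : 'M_h) *t T = ((1%:M : 'M_h) *t (P *t H)) *m ((1%:M : 'M_h) *t Phi)
          *m ((1%:M : 'M_h) *t ((1%:M : 'M_h) *t Q)).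
  by rewrite !tensmx_mul !mul1mx.
have eb : T *t (1%:M : 'M_h) = ((R *t (1%:M : 'M_h)) *t (1%:M : 'M_h)) *m (Phi *t (1%:M : 'M_h))
          *m ((H *t S) *t (1%:M : 'M_h)).
  by rewrite !tensmx_mul !mul1mx Talt.
have ec : B *t E' = (B *t DH) *m ((1%:M : 'M_b) *t ((1%:M : 'M_h) *t invmx H)).
  by rewrite tensmx_mul mulmx1.
have t1 : ((1%:M : 'M_b) *t ((1%:M : 'M_h) *t invmx H)) *m c4
          *m ((R *t (1%:M : 'M_h)) *t (1%:M : 'M_h))
        = (R *t ((1%:M : 'M_h) *t (1%:M : 'M_h))) *m c4
          *m (((1%:M : 'M_b) *t (1%:M : 'M_h)) *t invmx H).
  by rewrite !natA' -!mulmxA !tensmx_mul !mul1mx !mulmx1.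
have t2 : (B *t DH) *m (R *t ((1%:M : 'M_h) *t (1%:M : 'M_h)))
        = (R *t (1%:M : 'M_h)) *m (B *t DH).
  by rewrite !tensmx_mul tens11 mulmx1 mul1mx bR.
have t3 : (((1%:M : 'M_b) *t (1%:M : 'M_h)) *t invmx H) *m (Phi *t (1%:M : 'M_h))
        = (Phi *t (1%:M : 'M_h)) *m (((1%:M : 'M_h) *t (1%:M : 'M_b)) *t invmx H).
  by rewrite !tensmx_mul !tens11 mulmx1 !mul1mx mulmx1.
have sp : S *m P = 1%:M by rewrite -mulmxA QP mulmxV.
have t4 : (((1%:M : 'M_h) *t (1%:M : 'M_b)) *t invmx H) *m ((H *t S) *t (1%:M : 'M_h)) *m c5
          *m ((1%:M : 'M_h) *t (P *t H))
        = c5 *m (H *t (1%:M : 'M_(b * h))).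
  rewrite tensmx_mul tens11 mul1mx mulmx1 natA -mulmxA !tensmx_mul.
  by rewrite !mulmx1 sp mulVmx // tens11.
have t5 : (H *t (1%:M : 'M_(b * h))) *m (((1%:M : 'M_h) *t Phi)
            *m ((1%:M : 'M_h) *t ((1%:M : 'M_h) *t Q)))
        = ((1%:M : 'M_h) *t Phi) *m (H *t ((1%:M : 'M_h) *t Q)).
  by rewrite !tensmx_mul !mul1mx !mulmx1.
have hE' : H *m E' = DH *m (H *t (1%:M : 'M_h)).
  by rewrite mulmxA hDH -mulmxA tensmx_mul mulmx1 mulmxV.
have e1 : (B *t E') *m c4 *m (T *t (1%:M : 'M_h)) *m c5 *m ((1%:M : 'M_h) *t T)
   = (R *t (1%:M : 'M_h)) *m ((B *t DH) *m c4 *m (Phi *t (1%:M : 'M_h)) *m c5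
       *m ((1%:M : 'M_h) *t Phi) *m c6 *m c6i) *m (H *t ((1%:M : 'M_h) *t Q)).
  rewrite ea eb ec -!mulmxA (ctx3 t1) -!mulmxA (ctx2 t2) -!mulmxA (ctx2 t3) -!mulmxA.
  rewrite (ctx4 t4) -!mulmxA t5.
  by rewrite (ctx2 (cI_mul _ _)) ?mulnA // cI_id mul1mx.
have e2 : T *m (E' *t (1%:M : 'M_b)) *m c6i
   = (R *t (1%:M : 'M_h)) *m (Phi *m (DH *t B) *m c6i) *m (H *t ((1%:M : 'M_h) *t Q)).
  rewrite Talt -!mulmxA -natA !(ctx2 (tensmx_mul _ _ _ _)) hE'.
  by rewrite mulmx1.
rewrite e1 {1}e2; split; last by move->.
move/sand => h1.
have u1 : R *t (1%:M : 'M_h) \in unitmx by apply: unitmx_tens; rewrite ?unitmx1.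
have u2 : H *t ((1%:M : 'M_h) *t Q) \in unitmx.
  by apply: unitmx_tens => //; apply: unitmx_tens; rewrite ?unitmx1.
have {}h1 := h1 u1 u2.
have := congr1 (mulmx^~ c6) h1 => /=.
rewrite -!mulmxA !(cI_mul _ (esym (mulnA h h b))) cI_id !mulmx1.
done.
Qed.

End Local.
End Infra.
Arguments cI {K} p q.



Section Gen.
Variable K : fieldType.

Lemma tensA_cI m n p q r s (A : 'M[K]_(m, n)) (B : 'M[K]_(p, q)) (C : 'M[K]_(r, s)) :
  A *t B *t C = cI (m * p * r) (m * (p * r)) *m (A *t (B *t C)) *m cI (n * (q * s)) (n * q * s).
Proof. by rewrite -tensmxA castmx_cI. Qed.

Lemma tens_cI1 p q r s t (M : 'M[K]_(q, r)) : p = q -> r = s ->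
  (cI p q *m M *m cI r s) *t (1%:M : 'M[K]_t) = cI (p * t) (q * t) *m (M *t 1%:M) *m cI (r * t) (s * t).
Proof.
by move=> e1 e2; subst; rewrite !cI_id !mul1mx !mulmx1.
Qed.

Lemma tens_cI1r q r s t (M : 'M[K]_(q, r)) : r = s ->
  (M *m cI r s) *t (1%:M : 'M[K]_t) = (M *t 1%:M) *m cI (r * t) (s * t).
Proof. by move=> e; subst; rewrite !cI_id !mulmx1. Qed.

Lemma cI_split m x y : x = y -> cI (m * x) (m * y) = (1%:M : 'M[K]_m) *t cI x y.
Proof. by move=> e; subst; rewrite !cI_id tens11. Qed.

Lemma tens_mulr m p q r (X : 'M[K]_m) (Y : 'M[K]_(p, q)) : q = r ->
  X *t (Y *m cI q r) = (X *t Y) *m cI (m * q) (m * r).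
Proof. by move=> e; subst; rewrite !cI_id !mulmx1. Qed.

Lemma cancel_cI a c d e (A B : 'M[K]_(c, d)) : a = c -> d = e ->
  cI a c *m A *m cI d e = cI a c *m B *m cI d e -> A = B.
Proof. by move=> e1 e2; subst; rewrite !cI_id !mul1mx !mulmx1. Qed.

Lemma tens1_inj p q (A B : 'M[K]_(p, q)) : (1%:M : 'M[K]_1) *t A = (1%:M : 'M[K]_1) *t B -> A = B.
Proof. by rewrite !lunit; apply: cancel_cI; rewrite ?mul1n. Qed.

Section G.
Variables (b h : nat) (T : 'M[K]_(b * h, h * b)) (m : nat) (X : 'M[K]_m).

Local Notation psi k := (cI (k * b * h) (k * (b * h)) *m ((1%:M : 'M[K]_k) *t T) *m cI (k * (h * b)) (k * h * b)).

Lemma G1L (D' : 'M[K]_(b, b * b)) :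
  ((X *t D') *m cI (m * (b * b)) (m * b * b)) *t (1%:M : 'M[K]_h) *m psi (m * b) *m (psi m *t (1%:M : 'M[K]_b))
  = cI (m * b * h) (m * (b * h)) *m (X *t ((D' *t (1%:M : 'M[K]_h)) *m cI (b * b * h) (b * (b * h))
      *m ((1%:M : 'M[K]_b) *t T) *m cI (b * (h * b)) (b * h * b) *m (T *t (1%:M : 'M[K]_b))))
    *m cI (m * (h * b * b)) (m * h * b * b).
Proof.
rewrite tens_cI1; try by rewrite mulnA.
rewrite tens_cI1r; last by rewrite mulnA.
rewrite -(@tens11 K m b) !tensA_cI.
rewrite -!mulmxA.
rewrite !(ctx2 (@cI_mul K _ _ _ _)); try by rewrite ?mulnA.
rewrite (@cI_mul K _ _ _ _); try by rewrite ?mulnA.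
rewrite !(@cI_split m); try by rewrite ?mulnA.
by rewrite !(ctx2 (tensmx_mul _ _ _ _)) !mulmx1 -?mulmxA.
Qed.

Lemma G1R (H' : 'M[K]_h) (D' : 'M[K]_(b, b * b)) :
  psi m *m ((X *t H' *t D') *m cI (m * h * (b * b)) (m * h * b * b))
  = cI (m * b * h) (m * (b * h)) *m (X *t (T *m (H' *t D') *m cI (h * (b * b)) (h * b * b)))
    *m cI (m * (h * b * b)) (m * h * b * b).
Proof.
rewrite tensA_cI tens_mulr; last by rewrite mulnA.
rewrite -!mulmxA !(ctx2 (@cI_mul K _ _ _ _)); try by rewrite ?mulnA.
rewrite !(@cI_mul K _ _ _ _); try by rewrite ?mulnA.
rewrite cI_id mul1mx (ctx2 (tensmx_mul _ _ _ _)) mul1mx.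
done.
Qed.

Ltac ar := by rewrite ?mulnA ?muln1 ?mul1n.

Lemma G2L (B' : 'M[K]_b) (E' : 'M[K]_(h, h * h)) :
  ((X *t B' *t E') *m cI (m * b * (h * h)) (m * b * h * h)) *m (psi m *t (1%:M : 'M[K]_h))
    *m psi (m * h)
  = cI (m * b * h) (m * (b * h)) *m (X *t ((B' *t E') *m cI (b * (h * h)) (b * h * h)
      *m (T *t (1%:M : 'M[K]_h)) *m cI (h * b * h) (h * (b * h)) *m ((1%:M : 'M[K]_h) *t T)))
    *m cI (m * (h * (h * b))) (m * h * h * b).
Proof.
rewrite tens_cI1; try ar.
rewrite -(@tens11 K m h) !tensA_cI.
rewrite -!mulmxA !(ctx2 (@cI_mul K _ _ _ _)); try ar.
rewrite (@cI_mul K _ _ _ _); try ar.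
rewrite !(@cI_split m); try ar.
by rewrite !(ctx2 (tensmx_mul _ _ _ _)) !mulmx1 -?mulmxA.
Qed.

Lemma G2R (E' : 'M[K]_(h, h * h)) :
  psi m *m (((X *t E') *m cI (m * (h * h)) (m * h * h)) *t (1%:M : 'M[K]_b))
  = cI (m * b * h) (m * (b * h)) *m (X *t (T *m (E' *t (1%:M : 'M[K]_b))
       *m cI (h * h * b) (h * (h * b)))) *m cI (m * (h * (h * b))) (m * h * h * b).
Proof.
rewrite tens_cI1r; try ar.
rewrite tensA_cI tens_mulr; try ar.
rewrite -!mulmxA !(ctx2 (@cI_mul K _ _ _ _)); try ar.
rewrite !(@cI_mul K _ _ _ _); try ar.
rewrite cI_id mul1mx (ctx2 (tensmx_mul _ _ _ _)) mul1mx.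
all: by rewrite -?mulmxA.
Qed.

Lemma G3L (iX : 'M[K]_m) (EH : 'M[K]_(h, 1)) :
  psi m *m (((iX *t EH) *m cI (m * 1) m) *t (1%:M : 'M[K]_b))
  = cI (m * b * h) (m * (b * h)) *m (iX *t (T *m (EH *t (1%:M : 'M[K]_b)) *m cI (1 * b) b)).
Proof.
rewrite tens_cI1r; try ar.
rewrite tensA_cI tens_mulr; try ar.
rewrite -!mulmxA !(ctx2 (@cI_mul K _ _ _ _)); try ar.
rewrite !(@cI_mul K _ _ _ _); try ar.
rewrite cI_id mul1mx (ctx2 (tensmx_mul _ _ _ _)) mul1mx.
all: by rewrite -?mulmxA.
Qed.

Lemma G3R (iX : 'M[K]_m) (iB' : 'M[K]_b) (EH : 'M[K]_(h, 1)) :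
  ((iX *t iB' *t EH) *m cI (m * b * 1) (m * b))
  = cI (m * b * h) (m * (b * h)) *m (iX *t ((iB' *t EH) *m cI (b * 1) b)).
Proof.
rewrite tensA_cI tens_mulr; try ar.
rewrite -!mulmxA !(@cI_mul K _ _ _ _); try ar.
all: by rewrite -?mulmxA.
Qed.

Lemma G4L (iX : 'M[K]_m) (iH' : 'M[K]_h) (EB : 'M[K]_(b, 1)) :
  psi m *m ((iX *t iH' *t EB) *m cI (m * h * 1) (m * h))
  = cI (m * b * h) (m * (b * h)) *m (iX *t (T *m (iH' *t EB) *m cI (h * 1) h)).
Proof.
rewrite tensA_cI tens_mulr; try ar.
rewrite -!mulmxA !(ctx2 (@cI_mul K _ _ _ _)); try ar.
rewrite !(@cI_mul K _ _ _ _); try ar.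
rewrite cI_id mul1mx (ctx2 (tensmx_mul _ _ _ _)) mul1mx.
all: by rewrite -?mulmxA.
Qed.

Lemma G4R (iX : 'M[K]_m) (EB : 'M[K]_(b, 1)) :
  ((iX *t EB) *m cI (m * 1) m) *t (1%:M : 'M[K]_h)
  = cI (m * b * h) (m * (b * h)) *m (iX *t ((EB *t (1%:M : 'M[K]_h)) *m cI (1 * h) h)).
Proof.
rewrite tens_cI1r; try ar.
rewrite tensA_cI tens_mulr; try ar.
rewrite -!mulmxA !(@cI_mul K _ _ _ _); try ar.
all: by rewrite -?mulmxA.
Qed.

Lemma G0 (B' : 'M[K]_b) (H' : 'M[K]_h) : (B' *t H') *m T = T *m (H' *t B') ->
  (X *t B' *t H') *m psi m = psi m *m (X *t H' *t B').
Proof.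
move=> e.
rewrite !tensA_cI -!mulmxA !(ctx2 (@cI_mul K _ _ _ _)); try ar.
rewrite !cI_id !mul1mx !(ctx2 (tensmx_mul _ _ _ _)) mul1mx mulmx1 e.
all: by rewrite -?mulmxA.
Qed.

Lemma Gnat m' (u : 'M[K]_(m, m')) :
  (u *t (1%:M : 'M[K]_b) *t (1%:M : 'M[K]_h)) *m psi m'
  = psi m *m (u *t (1%:M : 'M[K]_h) *t (1%:M : 'M[K]_b)).
Proof.
rewrite !tensA_cI -!mulmxA !(ctx2 (@cI_mul K _ _ _ _)); try ar.
rewrite !cI_id !mul1mx !(ctx2 (tensmx_mul _ _ _ _)) !mul1mx !mulmx1 !tens11 mul1mx mulmx1.
all: by rewrite -?mulmxA.
Qed.

End G.
End Gen.



Section Conv.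
Variables (K : fieldType) (b h : nat) (aB : 'M[K]_b) (DB : 'M[K]_(b, b * b)) (EB : 'M[K]_(b, 1))
    (aH : 'M[K]_h) (DH : 'M[K]_(h, h * h)) (EH : 'M[K]_(h, 1))
    (Phi : 'M[K]_(b * h, h * b)).

Lemma M1_conv :
  (forall (bv : 'rV[K]_b) (hv : 'rV[K]_h),
         castmx (erefl _, mulnA b h b)
           (castmx (erefl _, esym (mulnA b b h)) ((bv *m DB) *t (hv *m aH))
              *m ((1%:M : 'M[K]_b) *t Phi))
           *m (Phi *t (1%:M : 'M[K]_b))
         = castmx (erefl _, mulnA h b b) ((bv *t hv) *m Phi *m (aH *t DB))) <->
  (DB *t aH) *m cI (b * b * h) (b * (b * h)) *m ((1%:M : 'M_b) *t Phi) *m cI (b * (h * b)) (b * h * b)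
    *m (Phi *t (1%:M : 'M_b)) = Phi *m (aH *t DB) *m cI (h * (b * b)) (h * b * b).
Proof.
have key : forall (bv : 'rV[K]_b) (hv : 'rV[K]_h),
  (castmx (erefl _, mulnA b h b)
           (castmx (erefl _, esym (mulnA b b h)) ((bv *m DB) *t (hv *m aH))
              *m ((1%:M : 'M[K]_b) *t Phi))
           *m (Phi *t (1%:M : 'M[K]_b))
         = castmx (erefl _, mulnA h b b) ((bv *t hv) *m Phi *m (aH *t DB))) <->
  (bv *t hv) *m ((DB *t aH) *m cI (b * b * h) (b * (b * h)) *m ((1%:M : 'M_b) *t Phi)
    *m cI (b * (h * b)) (b * h * b) *m (Phi *t (1%:M : 'M_b)))
  = (bv *t hv) *m (Phi *m (aH *t DB) *m cI (h * (b * b)) (h * b * b)).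
  move=> bv hv; rewrite !castmx_cI !cI_id !mul1mx -tensmx_mul -!mulmxA.
  by [].
split=> [H1|H1 bv hv]; last by apply/key; rewrite H1.
by apply: tens_rowP => x y; apply/key.
Qed.

Lemma M2_conv :
  (forall (bv : 'rV[K]_b) (hv : 'rV[K]_h),
         castmx (erefl _, mulnA h h b)
           (castmx (erefl _, esym (mulnA h b h))
              (castmx (erefl _, mulnA b h h) ((bv *m aB) *t (hv *m DH))
                 *m (Phi *t (1%:M : 'M[K]_h)))
            *m ((1%:M : 'M[K]_h) *t Phi))
         = (bv *t hv) *m Phi *m (DH *t aB)) <->
  (aB *t DH) *m cI (b * (h * h)) (b * h * h) *m (Phi *t (1%:M : 'M_h)) *m cI (h * b * h) (h * (b * h))
    *m ((1%:M : 'M_h) *t Phi) *m cI (h * (h * b)) (h * h * b) = Phi *m (DH *t aB).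
Proof.
have key : forall (bv : 'rV[K]_b) (hv : 'rV[K]_h),
  (castmx (erefl _, mulnA h h b)
           (castmx (erefl _, esym (mulnA h b h))
              (castmx (erefl _, mulnA b h h) ((bv *m aB) *t (hv *m DH))
                 *m (Phi *t (1%:M : 'M[K]_h)))
            *m ((1%:M : 'M[K]_h) *t Phi))
         = (bv *t hv) *m Phi *m (DH *t aB)) <->
  (bv *t hv) *m ((aB *t DH) *m cI (b * (h * h)) (b * h * h) *m (Phi *t (1%:M : 'M_h))
    *m cI (h * b * h) (h * (b * h)) *m ((1%:M : 'M_h) *t Phi) *m cI (h * (h * b)) (h * h * b))
  = (bv *t hv) *m (Phi *m (DH *t aB)).
  move=> bv hv; rewrite !castmx_cI !cI_id !mul1mx -tensmx_mul -!mulmxA.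
  by [].
split=> [H1|H1 bv hv]; last by apply/key; rewrite H1.
by apply: tens_rowP => x y; apply/key.
Qed.

Lemma cI11 : cI (1 * 1) 1 = (1%:M : 'M[K]_1).
Proof. exact: (cI_id K 1). Qed.

Lemma M3_conv :
  (forall (bv : 'rV[K]_b) (hv : 'rV[K]_h),
     castmx (erefl _, mul1n b) ((bv *t hv) *m Phi *m (EH *t (1%:M : 'M[K]_b)))
     = (hv *m EH) 0 0 *: bv) <->
  Phi *m (EH *t (1%:M : 'M_b)) *m cI (1 * b) b = ((1%:M : 'M_b) *t EH) *m cI (b * 1) b.
Proof.
have key1 : forall (bv : 'rV[K]_b) (hv : 'rV[K]_h),
  (hv *m EH) 0 0 *: bv = (bv *t hv) *m (((1%:M : 'M_b) *t EH) *m cI (b * 1) b).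
  move=> bv hv; rewrite mulmxA tensmx_mul mulmx1 [hv *m EH]mx11_scalar tens_mx_scalar.
  rewrite castmx_cI -[RHS]mulmxA (@cI_mul K _ _ _ (esym (muln1 b))) cI_id mulmx1.
  by rewrite cI11 mul1mx mxE eqxx mulr1n.
have key : forall (bv : 'rV[K]_b) (hv : 'rV[K]_h),
  (castmx (erefl _, mul1n b) ((bv *t hv) *m Phi *m (EH *t (1%:M : 'M[K]_b)))
     = (hv *m EH) 0 0 *: bv) <->
  (bv *t hv) *m (Phi *m (EH *t (1%:M : 'M_b)) *m cI (1 * b) b)
  = (bv *t hv) *m (((1%:M : 'M_b) *t EH) *m cI (b * 1) b).
  move=> bv hv; rewrite key1 castmx_cI cI_id mul1mx -!mulmxA.
  by [].
split=> [H1|H1 bv hv]; last by apply/key; rewrite H1.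
by apply: tens_rowP => x y; apply/key.
Qed.

Lemma M4_conv :
  (forall (bv : 'rV[K]_b) (hv : 'rV[K]_h),
     castmx (erefl _, muln1 h) ((bv *t hv) *m Phi *m ((1%:M : 'M[K]_h) *t EB))
     = (bv *m EB) 0 0 *: hv) <->
  Phi *m ((1%:M : 'M_h) *t EB) *m cI (h * 1) h = (EB *t (1%:M : 'M_h)) *m cI (1 * h) h.
Proof.
have key1 : forall (bv : 'rV[K]_b) (hv : 'rV[K]_h),
  (bv *m EB) 0 0 *: hv = (bv *t hv) *m ((EB *t (1%:M : 'M_h)) *m cI (1 * h) h).
  move=> bv hv; rewrite mulmxA tensmx_mul mulmx1 [bv *m EB]mx11_scalar tens_scalar_mx.
  rewrite castmx_cI -[RHS]mulmxA (@cI_mul K _ _ _ (esym (mul1n h))) cI_id mulmx1.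
  by rewrite cI11 mul1mx mxE eqxx mulr1n.
have key : forall (bv : 'rV[K]_b) (hv : 'rV[K]_h),
  (castmx (erefl _, muln1 h) ((bv *t hv) *m Phi *m ((1%:M : 'M[K]_h) *t EB))
     = (bv *m EB) 0 0 *: hv) <->
  (bv *t hv) *m (Phi *m ((1%:M : 'M_h) *t EB) *m cI (h * 1) h)
  = (bv *t hv) *m ((EB *t (1%:M : 'M_h)) *m cI (1 * h) h).
  move=> bv hv; rewrite key1 castmx_cI cI_id mul1mx -!mulmxA.
  by [].
split=> [H1|H1 bv hv]; last by apply/key; rewrite H1.
by apply: tens_rowP => x y; apply/key.
Qed.

End Conv.



Lemma cancel_cIl (K : fieldType) a c d (A B : 'M[K]_(c, d)) : a = c ->
  cI a c *m A = cI a c *m B -> A = B.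
Proof. by move=> e; subst; rewrite !cI_id !mul1mx. Qed.

Lemma castmx_cIc (K : fieldType) m n n' (e : n = n') (M : 'M[K]_(m, n)) :
  castmx (erefl m, e) M = M *m cI n n'.
Proof. by rewrite castmx_cI cI_id mul1mx. Qed.

Theorem proposition4p4 (K : fieldType) (b h : nat)
    (aB : 'M[K]_b) (DB : 'M[K]_(b, b * b)) (EB : 'M[K]_(b, 1))
    (aH : 'M[K]_h) (DH : 'M[K]_(h, h * h)) (EH : 'M[K]_(h, 1))
    (Phi : 'M[K]_(b * h, h * b)) (n : int) :
  [pchar K] =i pred0 ->
  hom_coalgebra aB DB EB ->
  hom_coalgebra aH DH EH ->
  (aB *t aH) *m Phi = Phi *m (aH *t aB) ->
  (comonad_distr_law aH DH EH aB DB EB (ddot_phi aB aH Phi n) <->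
   [/\ (* (M1) *)
       forall (bv : 'rV[K]_b) (hv : 'rV[K]_h),
         castmx (erefl _, mulnA b h b)
           (castmx (erefl _, esym (mulnA b b h)) ((bv *m DB) *t (hv *m aH))
              *m ((1%:M : 'M[K]_b) *t Phi))
           *m (Phi *t (1%:M : 'M[K]_b))
         = castmx (erefl _, mulnA h b b) ((bv *t hv) *m Phi *m (aH *t DB)),
       (* (M2) *)
       forall (bv : 'rV[K]_b) (hv : 'rV[K]_h),
         castmx (erefl _, mulnA h h b)
           (castmx (erefl _, esym (mulnA h b h))
              (castmx (erefl _, mulnA b h h) ((bv *m aB) *t (hv *m DH))
                 *m (Phi *t (1%:M : 'M[K]_h)))
            *m ((1%:M : 'M[K]_h) *t Phi))
         = (bv *t hv) *m Phi *m (DH *t aB),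
       (* (M3) *)
       forall (bv : 'rV[K]_b) (hv : 'rV[K]_h),
         castmx (erefl _, mul1n b) ((bv *t hv) *m Phi *m (EH *t (1%:M : 'M[K]_b)))
         = (hv *m EH) 0 0 *: bv &
       (* (M4) *)
       forall (bv : 'rV[K]_b) (hv : 'rV[K]_h),
         castmx (erefl _, muln1 h) ((bv *t hv) *m Phi *m ((1%:M : 'M[K]_h) *t EB))
         = (bv *m EB) 0 0 *: hv]).
Proof.
move=> _ [uB [hDB hEB] _ _ _] [uH [hDH hEH] _ _ _] hPhi.
have [gP gQ PQ QP] := powPQ uB hDB hEB n.
have i1 := L1_iff uB uH hDB hEB hPhi gP gQ.
have i2 := L2_iff uB uH hDB hEB hDH hPhi gP gQ QP.
have i3 := L3_iff Phi uH hEH gP gQ PQ.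
have i4 := L4_iff Phi uH gP gQ.
have l0 := L0_holds hPhi gP gQ.
rewrite /comonad_distr_law /ddot_phi /phi_twist /comon_delta /comon_eps.
split.
- move=> DL; have [[_ _] C1 C2 C3 C4] := DL 1%N 1%:M (unitmx1 _ _).
  move: C1 C2 C3 C4; rewrite !castmx_cIc !castmx_cI.
  rewrite !invmx_tens ?unitmx1 //.
  rewrite G1L G1R G2L G2R G3L G3R G4L G4R invmx1.
  move=> C1 C2 C3 C4; split.
  + apply/M1_conv/i1; apply: tens1_inj; apply: (cancel_cI _ _ C1); by rewrite !mulnA.
  + apply/M2_conv/i2; apply: tens1_inj; apply: (cancel_cI _ _ C2); by rewrite !mulnA.
  + apply/M3_conv/i3; apply: tens1_inj; apply: (cancel_cIl _ C3); by rewrite !mulnA.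
  + apply/M4_conv/i4; apply: tens1_inj; apply: (cancel_cIl _ C4); by rewrite !mulnA.
- case=> /M1_conv/i1 e1 /M2_conv/i2 e2 /M3_conv/i3 e3 /M4_conv/i4 e4 m aX uX.
  split; first split.
  + by rewrite !castmx_cI; apply: G0.
  + by move=> m' aY u _ _; rewrite !castmx_cI; apply: Gnat.
  + by rewrite !castmx_cIc !castmx_cI G1L G1R e1.
  + by rewrite !castmx_cIc !castmx_cI G2L G2R e2.
  + by rewrite !castmx_cIc !castmx_cI !invmx_tens // G3L G3R e3.
  + by rewrite !castmx_cIc !castmx_cI !invmx_tens // G4L G4R e4.
Qed.
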